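(* Let $K$ be a field and let $S=\langle x_1,\ldots,x_n\rangle$ be a semigroup of skew type that satisfies the cyclic condition (C) and such that $S=\{x_1^{a_1}\cdots x_n^{a_n}\mid a_i\ge 0\}$. Then there exists $p\ge 1$ such that, with $A=\langle x_1^p,\ldots,x_n^p\rangle$ (a commutative submonoid of $S$) and $C=\{x_1^{i_1}\cdots x_n^{i_n}\mid 0\le i_j<p\}$, we have $S=\bigcup_{c\in C}cA$ and $cA=Ac$ for every $c\in C$; in particular $K[S]$ is a finite left and right module over the commutative subring $K[A]$. Consequently $K[S]$ is a right and left noetherian PI algebra.
   Context: A semigroup of skew type is a monoid $S$ with a monoid presentation $S=\langle x_1,\ldots,x_n \mid x_ix_j=x_kx_l\rangle$ consisting of $\binom{n}{2}$ relations, each of the form $x_ix_j=x_kx_l$ with $i\neq j$, $k\neq l$, such that every word $x_px_q$ with $p\neq q$ appears (as one side) in exactly one of the relations; $X=\{x_1,\ldots,x_n\}$. $S$ satisfies the cyclic condition (C) if for every pair $x,y\in X$ there exist elements $x=z_1,z_2,\ldots,z_k$ and $y'$ in $X$ such that in $S$: $yz_1=z_2y'$, $\ldots$, $yz_{k-1}=z_ky'$, $yz_k=xy'$. $K[S]$ denotes the monoid algebra; $\langle Z\rangle$ denotes the submonoid generated by $Z$. *)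

(* Defs.v *)
From HB Require Import structures.
From mathcomp Require Import all_boot all_order all_algebra.
Set Implicit Arguments. Unset Strict Implicit. Unset Printing Implicit Defensive.
Import GRing.Theory.
Local Open Scope ring_scope.

(* A relation x_i x_j = x_k x_l is encoded as ((i, j), (k, l)). *)
Definition relation n := (('I_n * 'I_n) * ('I_n * 'I_n))%type.

Inductive cong (n : nat) (rels : seq (relation n)) : seq 'I_n -> seq 'I_n -> Prop :=
| cong_refl w : cong rels w w
| cong_sym u v : cong rels u v -> cong rels v u
| cong_trans u v w : cong rels u v -> cong rels v w -> cong rels u w
| cong_step (u v : seq 'I_n) (r : relation n) : r \in rels ->
    cong rels (u ++ [:: r.1.1; r.1.2] ++ v) (u ++ [:: r.2.1; r.2.2] ++ v).

Definition skew_type (n : nat) (rels : seq (relation n)) : Prop :=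
  [/\ size rels = 'C(n, 2),
      all (fun r : relation n => (r.1.1 != r.1.2) && (r.2.1 != r.2.2)) rels &
      forall p q : 'I_n, p != q ->
        count (fun r : relation n => (r.1 == (p, q)) || (r.2 == (p, q))) rels = 1%N].

Definition eval_word (M : Type) (mul : M -> M -> M) (one : M) (n : nat)
  (x : 'I_n -> M) (w : seq 'I_n) : M := foldr (fun i acc => mul (x i) acc) one w.

Definition is_monoid (M : Type) (mul : M -> M -> M) (one : M) : Prop :=
  [/\ associative mul, left_id one mul & right_id one mul].

Definition presents (M : Type) (mul : M -> M -> M) (one : M) (n : nat)
  (rels : seq (relation n)) (x : 'I_n -> M) : Prop :=
  (forall s : M, exists w : seq 'I_n, s = eval_word mul one x w) /\
  (forall u v : seq 'I_n, eval_word mul one x u = eval_word mul one x v <-> cong rels u v).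

(* Cyclic condition (C), with z_1 = z 0, ..., z_k = z (k-1), y = x j, x = x i. *)
Definition cyclic_condition (M : Type) (mul : M -> M -> M) (n : nat)
  (x : 'I_n -> M) : Prop :=
  forall i j : 'I_n, exists (k : nat) (z : nat -> 'I_n) (y' : 'I_n),
    [/\ (0 < k)%N, z 0%N = i,
        (forall t : nat, (t.+1 < k)%N -> mul (x j) (x (z t)) = mul (x (z t.+1)) (x y')) &
        mul (x j) (x (z k.-1)) = mul (x i) (x y')].

Definition ordered_word (n : nat) (a : 'I_n -> nat) : seq 'I_n :=
  flatten [seq nseq (a i) i | i <- enum 'I_n].

(* R together with e : M -> R is the monoid algebra K[M]: a K-algebra in which
   e is a monoid morphism whose image (indexed by M) is a K-basis. *)
Definition is_monoid_algebra (K : fieldType) (R : algType K) (M : Type)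
  (mul : M -> M -> M) (one : M) (e : M -> R) : Prop :=
  [/\ e one = 1,
      (forall a b, e (mul a b) = e a * e b),
      (forall r : R, exists (m : nat) (f : 'I_m -> M) (k : 'I_m -> K),
          r = \sum_(i < m) k i *: e (f i)) &
      (forall (m : nat) (f : 'I_m -> M) (k : 'I_m -> K), injective f ->
          \sum_(i < m) k i *: e (f i) = 0 -> forall i, k i = 0)].

Definition span_of (K : fieldType) (R : algType K) (M : Type) (e : M -> R)
  (A : M -> Prop) (r : R) : Prop :=
  exists (m : nat) (f : 'I_m -> M) (k : 'I_m -> K),
    (forall i, A (f i)) /\ r = \sum_(i < m) k i *: e (f i).

Definition finite_left_module (R : pzRingType) (B : R -> Prop) : Prop :=
  exists (m : nat) (g : 'I_m -> R), forall r : R,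
    exists al : 'I_m -> R, (forall i, B (al i)) /\ r = \sum_(i < m) al i * g i.

Definition finite_right_module (R : pzRingType) (B : R -> Prop) : Prop :=
  exists (m : nat) (g : 'I_m -> R), forall r : R,
    exists al : 'I_m -> R, (forall i, B (al i)) /\ r = \sum_(i < m) g i * al i.

Definition right_ideal (R : pzRingType) (I : R -> Prop) : Prop :=
  [/\ I 0, (forall a b, I a -> I b -> I (a + b)) & (forall a r, I a -> I (a * r))].

Definition left_ideal (R : pzRingType) (I : R -> Prop) : Prop :=
  [/\ I 0, (forall a b, I a -> I b -> I (a + b)) & (forall a r, I a -> I (r * a))].

Definition right_noetherian (R : pzRingType) : Prop :=
  forall I : nat -> R -> Prop, (forall k, right_ideal (I k)) ->
    (forall k a, I k a -> I k.+1 a) ->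
    exists N : nat, forall k, (N <= k)%N -> forall a, I k a -> I N a.

Definition left_noetherian (R : pzRingType) : Prop :=
  forall I : nat -> R -> Prop, (forall k, left_ideal (I k)) ->
    (forall k a, I k a -> I k.+1 a) ->
    exists N : nat, forall k, (N <= k)%N -> forall a, I k a -> I N a.

(* R satisfies a nonzero polynomial identity: a nonzero element f of the free
   algebra K<X_0..X_{m-1}> (coefficient function on words, finite support s)
   vanishing under every substitution X_i := a i in R. *)
Definition PI_algebra (K : fieldType) (R : algType K) : Prop :=
  exists (m : nat) (s : seq (seq 'I_m)) (f : seq 'I_m -> K),
    [/\ uniq s, (forall w, f w != 0 -> w \in s), (exists w, f w != 0) &
        forall a : 'I_m -> R, \sum_(w <- s) f w *: \prod_(i <- w) a i = 0].

(* Main.v *)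
Require Import Defs.
From HB Require Import structures.
From mathcomp Require Import all_boot all_order all_algebra all_fingroup.
From mathcomp Require Import mpoly.
From Stdlib Require Import Classical ClassicalEpsilon.
Set Implicit Arguments. Unset Strict Implicit. Unset Printing Implicit Defensive.

Module LinM.
Import Order.TTheory GRing.Theory.
Local Open Scope ring_scope.

Section Lin.
Variables (K : fieldType) (V : lmodType K) (D : nat) (Psi : 'X_{1..D} -> V).

Definition lin (f : {mpoly K[D]}) : V := \sum_(mu <- msupp f) f@_mu *: Psi mu.

Lemma lin_sub s f : uniq s -> {subset msupp f <= s} ->
  lin f = \sum_(mu <- s) f@_mu *: Psi mu.
Proof.
move=> us sub; rewrite (bigID (fun mu => mu \in msupp f)) /=.
rewrite [X in _ + X]big1 ?addr0; last first.
  by move=> mu; rewrite mcoeff_msupp negbK => /eqP ->; rewrite scale0r.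
rewrite -big_filter; apply: perm_big.
apply: uniq_perm; rewrite ?filter_uniq ?msupp_uniq //.
by move=> mu; rewrite mem_filter; case: (boolP (mu \in msupp f)) => // /sub ->.
Qed.

Lemma linD f g : lin (f + g) = lin f + lin g.
Proof.
set s := undup (msupp f ++ msupp g ++ msupp (f + g)).
have us : uniq s by apply: undup_uniq.
rewrite !(@lin_sub s) //; last 3 first.
- by move=> mu h; rewrite mem_undup !mem_cat h ?orbT.
- by move=> mu h; rewrite mem_undup !mem_cat h ?orbT.
- by move=> mu h; rewrite mem_undup !mem_cat h ?orbT.
by rewrite -big_split /=; apply: eq_bigr => mu _; rewrite mcoeffD scalerDl.
Qed.

Lemma linZ k f : lin (k *: f) = k *: lin f.
Proof.
rewrite (@lin_sub (msupp f)) ?msupp_uniq //; last exact: msuppZ_le.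
rewrite /lin scaler_sumr; apply: eq_bigr => mu _.
by rewrite mcoeffZ scalerA.
Qed.

Lemma lin0 : lin 0 = 0.
Proof. by rewrite /lin msupp0 big_nil. Qed.

Lemma linX mu : lin 'X_[mu] = Psi mu.
Proof. by rewrite /lin msuppX big_seq1 mcoeffX eqxx scale1r. Qed.

Lemma lin_sum (T : Type) (r : seq T) (F : T -> {mpoly K[D]}) :
  lin (\sum_(t <- r) F t) = \sum_(t <- r) lin (F t).
Proof.
elim: r => [|t r IH]; first by rewrite !big_nil lin0.
by rewrite !big_cons linD IH.
Qed.

Lemma lin_expand f : lin f = \sum_(mu <- msupp f) f@_mu *: lin 'X_[mu].
Proof. by apply: eq_bigr => mu _; rewrite linX. Qed.

End Lin.

Lemma lin_ext (K : fieldType) (V : lmodType K) (D : nat) (P1 P2 : 'X_{1..D} -> V) f :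
  (forall mu, mu \in msupp f -> P1 mu = P2 mu) -> lin P1 f = lin P2 f.
Proof. by move=> H; rewrite /lin big_seq_cond [RHS]big_seq_cond; apply: eq_bigr => mu /andP [h _]; rewrite H. Qed.

End LinM.

Module DickM.

Lemma ex_min_prop (Q : nat -> Prop) : (exists k, Q k) -> exists k, Q k /\ forall j, Q j -> k <= j.
Proof.
case=> k Qk; elim: k {-2}k (leqnn k) Qk => [|b IH] k hk Qk.
  by exists k; split => // j _; move: hk; rewrite leqn0 => /eqP ->.
case: (classic (exists j, j < k /\ Q j)) => [[j [hj Qj]]|H].
  by apply: (IH j) => //; rewrite -ltnS (leq_trans hj hk).
exists k; split => // j Qj; rewrite leqNgt; apply/negP => hj; apply: H; by exists j.
Qed.

Lemma tail_min (a : nat -> nat) (N : nat) : exists i, N <= i /\ forall j, N <= j -> a i <= a j.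
Proof.
have ex : exists v, exists i, N <= i /\ a i = v by exists (a N), N.
have [v [[i [hi ei]] hv]] := ex_min_prop ex.
exists i; split => // j hj; rewrite ei; apply: hv; by exists j.
Qed.

Lemma mono_subseq (a : nat -> nat) : exists phi : nat -> nat,
  (forall s, phi s < phi s.+1) /\ (forall s s', s <= s' -> a (phi s) <= a (phi s')).
Proof.
have [mn Hmn] : exists mn : nat -> nat, forall N, N <= mn N /\ forall j, N <= j -> a (mn N) <= a j.
  exists (fun N => proj1_sig (constructive_indefinite_description _ (tail_min a N))).
  move=> N; exact: proj2_sig (constructive_indefinite_description _ (tail_min a N)).
pose phi := fix phi s := if s is s'.+1 then mn (phi s').+1 else mn 0.
have h1 : forall s, phi s < phi s.+1 by move=> s /=; case: (Hmn (phi s).+1).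
pose Nn s := if s is s'.+1 then (phi s').+1 else 0.
have hN : forall s, phi s = mn (Nn s) by case.
have h2 : forall s, a (phi s) <= a (phi s.+1).
  move=> s; rewrite [X in a X <= _]hN.
  case: (Hmn (Nn s)) => hle; apply.
  apply: leq_trans hle _; rewrite -hN; exact: ltnW (h1 s).
exists phi; split => // s s' hs.
elim: s' hs => [|s' IH]; first by rewrite leqn0 => /eqP ->.
rewrite leq_eqVlt => /orP [/eqP ->//|hs].
exact: leq_trans (IH hs) (h2 s').
Qed.

Lemma dickson_gen (k : nat) (u : nat -> nat -> nat) : exists phi : nat -> nat,
  (forall s, phi s < phi s.+1) /\ (forall s s' i, s <= s' -> i < k -> u (phi s) i <= u (phi s') i).
Proof.
elim: k => [|k [phi [h1 h2]]]; first by exists id; split.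
have [psi [g1 g2]] := mono_subseq (fun s => u (phi s) k).
have phimono : forall s s', s <= s' -> phi s <= phi s'.
  move=> s s'; elim: s' => [|s' IH]; first by rewrite leqn0 => /eqP ->.
  rewrite leq_eqVlt => /orP [/eqP ->//|hs]; exact: leq_trans (IH hs) (ltnW (h1 s')).
have psimono : forall s s', s <= s' -> psi s <= psi s'.
  move=> s s'; elim: s' => [|s' IH]; first by rewrite leqn0 => /eqP ->.
  rewrite leq_eqVlt => /orP [/eqP ->//|hs]; exact: leq_trans (IH hs) (ltnW (g1 s')).
exists (fun s => phi (psi s)); split.
  move=> s; have := g1 s; move: (psi s) (psi s.+1) => p q hpq.
  apply: (@leq_trans (phi p.+1)); first exact: h1.
  exact: phimono.
move=> s s' i hs; rewrite ltnS leq_eqVlt => /orP [/eqP ->|hi].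
  exact: g2.
by apply: h2 => //; apply: psimono.
Qed.

Lemma dickson (k : nat) (u : nat -> nat -> nat) : exists s s', s < s' /\ forall i, i < k -> u s i <= u s' i.
Proof.
have [phi [h1 h2]] := dickson_gen k u.
exists (phi 0), (phi 1); split => // i hi; exact: h2.
Qed.

End DickM.

Module NoethM.
Import LinM DickM.
Import Order.TTheory GRing.Theory.
Local Open Scope ring_scope.

Section Noeth.
Variables (K : fieldType) (V : lmodType K) (I : finType) (d : nat) (G : I -> V)
  (act : 'X_{1..d} -> V -> V).
Hypothesis actD : forall nu u v, act nu (u + v) = act nu u + act nu v.
Hypothesis actZ : forall nu k u, act nu (k *: u) = k *: act nu u.
Hypothesis actM : forall nu1 nu2 u, act (nu1 + nu2)%MM u = act nu1 (act nu2 u).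
Hypothesis span : forall v, exists (m : nat) (c : 'I_m -> I) (nu : 'I_m -> 'X_{1..d}) (k : 'I_m -> K),
  v = \sum_(i < m) k i *: act (nu i) (G (c i)).

Local Notation D := (#|I| + d)%N.

Definition zm (c : I) (nu : 'X_{1..d}) : 'X_{1..D} :=
  [multinom (match split i with inl c' => nat_of_bool (c' == enum_rank c) | inr j => nu j end) | i < D].
Definition ym (dl : 'X_{1..d}) : 'X_{1..D} :=
  [multinom (match split i with inl _ => 0%N | inr j => dl j end) | i < D].
Definition yp (mu : 'X_{1..D}) : 'X_{1..d} := [multinom mu (rshift #|I| j) | j < d].
Definition Psi (mu : 'X_{1..D}) : V :=
  \sum_(c : I) (mu (lshift d (enum_rank c)))%:R *: act (yp mu) (G c).

Lemma split_r j : split (rshift #|I| j : 'I_D) = inr j.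
Proof. exact: (unsplitK (inr j)). Qed.
Lemma split_l c : split (lshift d c : 'I_D) = inl c.
Proof. exact: (unsplitK (inl c)). Qed.

Lemma yp_zm c nu : yp (zm c nu) = nu.
Proof. by apply/mnmP => j; rewrite !mnmE split_r. Qed.

Lemma zm_l c c' nu : zm c nu (lshift d c') = nat_of_bool (c' == enum_rank c).
Proof. by rewrite mnmE split_l. Qed.

Lemma Psi_zm c nu : Psi (zm c nu) = act nu (G c).
Proof.
rewrite /Psi (bigD1 c) //= big1 ?addr0.
  by rewrite zm_l eqxx yp_zm scale1r.
by move=> c0 nc; rewrite zm_l (inj_eq enum_rank_inj) (negbTE nc) scale0r.
Qed.

Lemma ym_zm dl c nu : (ym dl + zm c nu)%MM = zm c (dl + nu)%MM.
Proof.
apply/mnmP => i; rewrite mnmDE !mnmE.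
by case: (split i) => [c'|j] //=; rewrite mnmDE.
Qed.

Lemma zm_le c c' nu nu' : (zm c nu <= zm c' nu')%MM -> c = c' /\ (nu <= nu')%MM.
Proof.
move/mnm_lepP => H; split.
  have := H (lshift d (enum_rank c)); rewrite !zm_l eqxx.
  by case: (enum_rank c =P enum_rank c') => [/enum_rank_inj|].
apply/mnm_lepP => j; have := H (rshift #|I| j); by rewrite !mnmE split_r.
Qed.

Lemma act0 nu : act nu 0 = 0.
Proof. by have := actZ nu 0 0; rewrite !scale0r. Qed.

Lemma act_sum nu (T : Type) (r : seq T) (F : T -> V) :
  act nu (\sum_(t <- r) F t) = \sum_(t <- r) act nu (F t).
Proof.
elim: r => [|t r IH]; first by rewrite !big_nil act0.
by rewrite !big_cons actD IH.
Qed.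

Definition Zlin (f : {mpoly K[D]}) := forall mu, mu \in msupp f -> exists c nu, mu = zm c nu.

Lemma Zlin0 : Zlin 0. Proof. by move=> mu; rewrite msupp0. Qed.
Lemma ZlinD f g : Zlin f -> Zlin g -> Zlin (f + g).
Proof. by move=> hf hg mu /msuppD_le; rewrite mem_cat => /orP [/hf|/hg]. Qed.
Lemma ZlinZ k f : Zlin f -> Zlin (k *: f).
Proof. by move=> hf mu /msuppZ_le /hf. Qed.
Lemma ZlinX dl f : Zlin f -> Zlin ('X_[ym dl] * f).
Proof.
move=> hf mu /msuppM_le /allpairsP [[m1 m2] /= [h1 h2 ->]].
move: h1; rewrite msuppX inE => /eqP ->.
case: (hf _ h2) => c [nu ->]; exists c, (dl + nu)%MM; exact: ym_zm.
Qed.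

Lemma lin_ym dl f : Zlin f -> lin Psi ('X_[ym dl] * f) = act dl (lin Psi f).
Proof.
move=> hf; rewrite {1}(mpolyE f) mulr_sumr lin_sum [in RHS]/lin act_sum.
rewrite big_seq [RHS]big_seq; apply: eq_bigr => mu hmu.
rewrite -scalerAr -mpolyXD linZ linX actZ; congr (_ *: _).
case: (hf _ hmu) => c [nu ->].
by rewrite ym_zm !Psi_zm actM.
Qed.

Lemma surj v : exists f, Zlin f /\ lin Psi f = v.
Proof.
case: (span v) => m [c [nu [k ->]]].
exists (\sum_(i < m) k i *: 'X_[zm (c i) (nu i)]); split.
  move=> mu /msupp_sum_le /flattenP [s /mapP [i _ ->]] /msuppZ_le.
  by rewrite msuppX inE => /eqP ->; exists (c i), (nu i).
rewrite lin_sum; apply: eq_bigr => i _.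
by rewrite linZ linX Psi_zm.
Qed.

Definition closedJ (J : V -> Prop) := [/\ J 0, (forall u v, J u -> J v -> J (u + v)),
  (forall k u, J u -> J (k *: u)) & (forall nu u, J u -> J (act nu u))].

Theorem acc_chain (J : nat -> V -> Prop) : (forall t, closedJ (J t)) ->
  (forall t v, J t v -> J t.+1 v) ->
  exists N, forall t, (N <= t)%N -> forall v, J t v -> J N v.
Proof.
move=> cl asc.
have mono : forall t t', (t <= t')%N -> forall v, J t v -> J t' v.
  move=> t t'; elim: t' => [|t' IH]; first by rewrite leqn0 => /eqP ->.
  rewrite leq_eqVlt => /orP [/eqP -> //|h] v /(IH h); exact: asc.
pose Nf t f := Zlin f /\ J t (lin Psi f).
have Nzero : forall t, Nf t 0 by move=> t; split; [exact: Zlin0|rewrite lin0; case: (cl t)].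
have NfD : forall t f g, Nf t f -> Nf t g -> Nf t (f + g).
  move=> t f g [z1 j1] [z2 j2]; split; first exact: ZlinD.
  by rewrite linD; case: (cl t) => _ H _ _; apply: H.
have NfZ : forall t k f, Nf t f -> Nf t (k *: f).
  move=> t k f [z1 j1]; split; first exact: ZlinZ.
  by rewrite linZ; case: (cl t) => _ _ H _; apply: H.
have NfX : forall t dl f, Nf t f -> Nf t ('X_[ym dl] * f).
  move=> t dl f [z1 j1]; split; first exact: ZlinX.
  by rewrite lin_ym //; case: (cl t) => _ _ _ H; apply: H.
have Nfmono : forall t t' f, (t <= t')%N -> Nf t f -> Nf t' f.
  by move=> t t' f h [z j]; split => //; apply: mono h _ j.
pose L t mu := exists f, [/\ Nf t f, f != 0 & mlead f = mu].
have Lzm : forall t mu, L t mu -> exists c nu, mu = zm c nu.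
  by move=> t mu [f [[z _] nz <-]]; apply: z; apply: mlead_supp.
have Lup : forall t c nu dl, L t (zm c nu) -> L t (zm c (dl + nu)%MM).
  move=> t c nu dl [f [nf nz e]]; exists ('X_[ym dl] * f); split; first exact: NfX.
  - by rewrite mulf_eq0 negb_or nz andbT -msupp_eq0 msuppX.
  - rewrite mleadM ?mleadXm ?e ?ym_zm //.
    by rewrite -msupp_eq0 msuppX.
have Lmono : forall t t' mu, (t <= t')%N -> L t mu -> L t' mu.
  by move=> t t' mu h [f [nf nz e]]; exists f; split => //; apply: (Nfmono) h nf.
have stab : exists N0, forall t, (N0 <= t)%N -> forall mu, L t mu -> L N0 mu.
  apply: NNPP => H.
  have H' : forall N0, exists tm : nat * 'X_{1..D}, (N0 <= tm.1)%N /\ L tm.1 tm.2 /\ ~ L N0 tm.2.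
    move=> N0; apply: NNPP => H2; apply: H; exists N0 => t ht mu Lmu.
    apply: NNPP => nL; apply: H2; by exists (t, mu).
  pose nxt N0 := proj1_sig (constructive_indefinite_description _ (H' N0)).
  have nxtP : forall N0, (N0 <= (nxt N0).1)%N /\ L (nxt N0).1 (nxt N0).2 /\ ~ L N0 (nxt N0).2.
    move=> N0; exact: proj2_sig (constructive_indefinite_description _ (H' N0)).
  pose kk := fix kk s := if s is s'.+1 then (nxt (kk s')).1 else 0%N.
  pose mu s := (nxt (kk s)).2.
  have kS : forall s, kk s.+1 = (nxt (kk s)).1 by [].
  have kmono : forall s s', (s <= s')%N -> (kk s <= kk s')%N.
    move=> s s'; elim: s' => [|s' IH]; first by rewrite leqn0 => /eqP ->.
    rewrite leq_eqVlt => /orP [/eqP -> //|h].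
    by apply: leq_trans (IH h) _; rewrite kS; case: (nxtP (kk s')).
  have [s [s' [ss' hle]]] := dickson D (fun s i => oapp (mu s) 0%N (insub i)).
  have hmu : (mu s <= mu s')%MM.
    apply/mnm_lepP => i; have := hle i (ltn_ord i); by rewrite valK.
  have L1 : L (kk s.+1) (mu s) by rewrite kS; case: (nxtP (kk s)) => _ [].
  have L2 : L (kk s') (mu s) by apply: (Lmono) L1; apply: kmono.
  have [c [nu e1]] := Lzm _ _ L2.
  have L3 : L (kk s'.+1) (mu s') by rewrite kS; case: (nxtP (kk s')) => _ [].
  have [c' [nu' e2]] := Lzm _ _ L3.
  move: hmu; rewrite e1 e2 => /zm_le [ec hnu]; subst c'.
  rewrite e1 in L2; have := Lup _ _ _ (nu' - nu)%MM L2; rewrite submK // -e2 => L4.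
  by case: (nxtP (kk s')) => _ [_ []].
case: stab => N0 stab; exists N0 => t ht.
have key : forall mu f, Nf t f -> mlead f = mu -> Nf N0 f.
  elim/(well_founded_induction (@ltom_wf D)) => mu IH f nf emu.
  have [->|nz] := eqVneq f 0; first exact: Nzero.
  have [g [ng nzg eg]] : L N0 mu by apply: (stab t ht); exists f; split.
  pose h := f - (mleadc f / mleadc g) *: g.
  have ngt : Nf t g by apply: (Nfmono) ht ng.
  have nh : Nf t h.
    apply: (NfD) => //; rewrite -scaleN1r; apply: (NfZ); exact: (NfZ).
  have gc : mleadc g != 0 by rewrite mleadc_eq0.
  have hmu : h@_mu = 0.
    by rewrite mcoeffB mcoeffZ emu eg mulfVK ?subrr // -eg.
  have Nh : Nf N0 h.
    have [->|nzh] := eqVneq h 0; first exact: Nzero.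
    apply: (IH (mlead h)) => //.
    rewrite lt_neqAle; apply/andP; split.
      apply/eqP => e; move: (mlead_supp nzh); rewrite mcoeff_msupp e hmu eqxx //.
    apply: le_trans (mleadB_le _ _) _; rewrite leUx -emu lexx /=.
    by apply: le_trans (mleadZ_le _ _) _; rewrite eg emu.
  have -> : f = h + (mleadc f / mleadc g) *: g by rewrite /h subrK.
  by apply: (NfD) => //; apply: (NfZ).
move=> v jv; case: (surj v) => f [zf ef].
have jf : J t (lin Psi f) by rewrite ef.
have := key _ f (conj zf jf) erefl.
by case => _; rewrite ef.
Qed.

End Noeth.

End NoethM.

Module PIM.
Import GRing.Theory.
Local Open Scope ring_scope.

Definition stdp (R : pzRingType) (A : lalgType R) (N : nat) (a : 'I_N -> A) : A :=
  \sum_(s : 'S_N) ((-1) ^+ s : R) *: \prod_(i < N) a (s i).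

Lemma ffun_noninj (N : nat) (J : finType) (f : {ffun 'I_N -> J}) : (#|J| < N)%N ->
  exists i1 i2, i1 != i2 /\ f i1 = f i2.
Proof.
move=> hJ; apply: NNPP => H.
have inj : injective f.
  move=> i1 i2 e; apply: NNPP => ne; apply: H; exists i1, i2; split => //; exact/eqP.
by have := leq_card f inj; rewrite card_ord leqNgt hJ.
Qed.

Lemma stdp_vanish (C : comNzRingType) (A : algType C) (J : finType) (b : J -> A) (N : nat) :
  (#|J| < N)%N -> (forall a : A, exists lam : J -> C, a = \sum_j lam j *: b j) ->
  forall a : 'I_N -> A, stdp a = 0.
Proof.
move=> hJ hspan a.
have [lam Hl] : exists lam : 'I_N -> J -> C, forall i, a i = \sum_j lam i j *: b j.
  exact: (fin_all_exists (fun i => hspan (a i))).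
have E : forall s : 'S_N, \prod_(i < N) a (s i) =
    \sum_(f : {ffun 'I_N -> J}) (\prod_(i < N) lam (s i) (f i)) *: \prod_(i < N) b (f i).
  move=> s; rewrite (eq_bigr (fun i => \sum_j lam (s i) j *: b j)); last by move=> i _; rewrite Hl.
  rewrite bigA_distr_bigA /=; apply: eq_bigr => f _.
  by rewrite scaler_prod.
rewrite /stdp (eq_bigr (fun s : 'S_N => \sum_(f : {ffun 'I_N -> J})
   (((-1) ^+ s) * \prod_(i < N) lam (s i) (f i)) *: \prod_(i < N) b (f i))); last first.
  by move=> s _; rewrite E scaler_sumr; apply: eq_bigr => f _; rewrite scalerA.
rewrite exchange_big /=; apply: big1 => f _.
rewrite -scaler_suml.
have -> : \sum_(s : 'S_N) (-1) ^+ s * \prod_(i < N) lam (s i) (f i) =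
          \det (\matrix_(i < N, k < N) lam k (f i)).
  rewrite /determinant; apply: eq_bigr => s _; congr (_ * _).
  by apply: eq_bigr => i _; rewrite mxE.
have [i1 [i2 [ne e]]] := ffun_noninj f hJ.
rewrite (determinant_alternate ne) ?scale0r //.
by move=> k; rewrite !mxE e.
Qed.

Lemma stdp_matrix (C : comNzRingType) (m N : nat) : (m.+1 * m.+1 < N)%N ->
  forall a : 'I_N -> 'M[C]_m.+1, stdp a = 0.
Proof.
move=> hN; apply: (@stdp_vanish C _ ('I_m.+1 * 'I_m.+1)%type (fun p => delta_mx p.1 p.2)).
  by rewrite card_prod card_ord.
move=> A; exists (fun p => A p.1 p.2).
by rewrite {1}(matrix_sum_delta A) pair_big.
Qed.


Section Rep.
Variables (K : fieldType) (R : algType K) (d : nat) (rho : {mpoly K[d]} -> R) (m : nat)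
  (Gs : 'I_m.+1 -> R).
Hypothesis rhoD : forall p q, rho (p + q) = rho p + rho q.
Hypothesis rhoZ : forall k p, rho (k *: p) = k *: rho p.
Hypothesis rhoM : forall p q, rho (p * q) = rho p * rho q.
Hypothesis rho1 : rho 1 = 1.
Hypothesis spanG : forall v : R, exists p : 'I_m.+1 -> {mpoly K[d]}, v = \sum_j Gs j * rho (p j).
Hypothesis faith : forall r, (forall c, r * Gs c = 0) -> r = 0.

Lemma rho0 : rho 0 = 0.
Proof. by have := rhoZ 0 0; rewrite !scale0r. Qed.

Lemma rho_sum (I : Type) (r : seq I) (F : I -> {mpoly K[d]}) : rho (\sum_(i <- r) F i) = \sum_(i <- r) rho (F i).
Proof. elim: r => [|i r IH]; by rewrite ?big_nil ?rho0 // !big_cons rhoD IH. Qed.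

Definition Rep (r : R) (Phi : 'M[{mpoly K[d]}]_m.+1) :=
  forall c, r * Gs c = \sum_j Gs j * rho (Phi j c).

Lemma Rep0 : Rep 0 0.
Proof. by move=> c; rewrite mul0r big1 // => j _; rewrite mxE rho0 mulr0. Qed.

Lemma Rep1 : Rep 1 1.
Proof.
move=> c; rewrite mul1r (bigD1 c) //= big1 ?addr0.
  by rewrite mxE eqxx rho1 mulr1.
by move=> j nj; rewrite mxE (negbTE nj) rho0 mulr0.
Qed.

Lemma RepD r P s Q : Rep r P -> Rep s Q -> Rep (r + s) (P + Q).
Proof.
move=> hr hs c; rewrite mulrDl hr hs -big_split; apply: eq_bigr => j _.
by rewrite mxE rhoD mulrDr.
Qed.

Lemma RepM r P s Q : Rep r P -> Rep s Q -> Rep (r * s) (P * Q).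
Proof.
move=> hr hs c; rewrite -mulrA hs mulr_sumr.
rewrite (eq_bigr (fun j => \sum_l Gs l * (rho (P l j) * rho (Q j c)))); last first.
  by move=> j _; rewrite mulrA hr mulr_suml; apply: eq_bigr => l _; rewrite mulrA.
rewrite exchange_big; apply: eq_bigr => l _ /=.
rewrite -mulr_sumr; congr (_ * _).
by rewrite mxE rho_sum; apply: eq_bigr => j _; rewrite rhoM.
Qed.

Lemma RepZ k r P : Rep r P -> Rep (k *: r) (k%:MP *: P).
Proof.
move=> hr c; rewrite -scalerAl hr scaler_sumr; apply: eq_bigr => j _.
by rewrite mxE mul_mpolyC rhoZ scalerAr.
Qed.

Lemma Rep_exists r : exists P, Rep r P.
Proof.
have [p Hp] : exists p : 'I_m.+1 -> 'I_m.+1 -> {mpoly K[d]}, forall c, r * Gs c = \sum_j Gs j * rho (p c j).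
  exact: (fin_all_exists (fun c => spanG (r * Gs c))).
by exists (\matrix_(j, c) p c j) => c; rewrite Hp; apply: eq_bigr => j _; rewrite mxE.
Qed.

Theorem rep_PI N : (m.+1 * m.+1 < N)%N -> forall a : 'I_N -> R, stdp a = 0.
Proof.
move=> hN a.
have [P HP] : exists P : 'I_N -> 'M[{mpoly K[d]}]_m.+1, forall i, Rep (a i) (P i).
  exact: (fin_all_exists (fun i => Rep_exists (a i))).
have H : Rep (stdp a) (stdp P).
  rewrite /stdp; apply: (big_ind2 Rep Rep0 (@RepD)) => s _.
  have -> : ((-1) ^+ s : {mpoly K[d]}) = ((-1) ^+ s : K)%:MP.
    by rewrite (rmorph_sign (mpolyC d (R := K))).
  apply: RepZ; apply: (big_ind2 Rep Rep1 (@RepM)) => i _; exact: HP.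
apply: faith => c; rewrite H (stdp_matrix hN) big1 // => j _.
by rewrite mxE rho0 mulr0.
Qed.

End Rep.

End PIM.

Module PIWM.
Import PIM.
Import GRing.Theory.
Local Open Scope ring_scope.

Lemma stdp_PI (K : fieldType) (R : algType K) (N : nat) :
  (forall a : 'I_N -> R, stdp a = 0) -> PI_algebra R.
Proof.
move=> H.
pose wd (s : 'S_N) : seq 'I_N := [seq s i | i <- index_enum 'I_N].
have wd_inj : injective wd.
  move=> s t /eq_in_map e; apply/permP => i; apply: e; exact: mem_index_enum.
pose f (w : seq 'I_N) : K := \sum_(s : 'S_N) (if w == wd s then (-1) ^+ s else 0).
have fwd : forall s, f (wd s) = (-1) ^+ s.
  move=> s; rewrite /f (bigD1 s) //= eqxx big1 ?addr0 // => t nt.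
  by rewrite (inj_eq wd_inj) eq_sym (negbTE nt).
exists N, [seq wd s | s <- index_enum 'S_N], f; split.
- by rewrite map_inj_uniq ?index_enum_uniq.
- move=> w nz; apply: contraR nz => nw; rewrite /f big1 // => s _.
  case: eqP => // e; move: nw; rewrite e map_f // mem_index_enum //.
- by exists (wd 1%g); rewrite fwd odd_perm1 expr0 oner_neq0.
- move=> a; rewrite big_map.
  transitivity (stdp a); last exact: H.
  rewrite /stdp; apply: eq_bigr => s _.
  by rewrite fwd /wd big_map.
Qed.

End PIWM.

Module CombM.

Section Comb.
Variables (n : nat) (rels : seq (relation n)) (M : Type) (mul : M -> M -> M) (one : M) (x : 'I_n -> M).
Hypothesis Hmon : is_monoid mul one.
Hypothesis Hsk : skew_type rels.
Hypothesis Hpr : presents mul one rels x.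
Hypothesis Hcy : cyclic_condition mul x.

Local Notation ev := (eval_word mul one x).

Lemma mulA : associative mul. Proof. by case: Hmon. Qed.
Lemma mul1m : left_id one mul. Proof. by case: Hmon. Qed.
Lemma mulm1 : right_id one mul. Proof. by case: Hmon. Qed.

Lemma ev_cat u v : ev (u ++ v) = mul (ev u) (ev v).
Proof. elim: u => [|a u IH] /=; first by rewrite mul1m. by rewrite IH mulA. Qed.
Lemma ev_cons a u : ev (a :: u) = mul (x a) (ev u). Proof. by []. Qed.
Lemma ev1 a : ev [:: a] = x a. Proof. by rewrite /= mulm1. Qed.
Lemma ev2 a b : ev [:: a; b] = mul (x a) (x b). Proof. by rewrite /= mulm1. Qed.

Definition xp j k := ev (nseq k j).
Lemma xp0 j : xp j 0 = one. Proof. by []. Qed.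
Lemma xpD j a b : xp j (a + b) = mul (xp j a) (xp j b).
Proof. by rewrite /xp nseqD ev_cat. Qed.
Lemma xpS j k : xp j k.+1 = mul (x j) (xp j k). Proof. by []. Qed.
Lemma xpSr j k : xp j k.+1 = mul (xp j k) (x j).
Proof. by rewrite -addn1 xpD /xp /= mulm1. Qed.

Definition s1 (r : relation n) := [:: r.1.1; r.1.2].
Definition s2 (r : relation n) := [:: r.2.1; r.2.2].
Definition related (u v : seq 'I_n) := u = v \/ exists2 r, r \in rels &
   (u = s1 r /\ v = s2 r) \/ (u = s2 r /\ v = s1 r).

Lemma rels_diag r : r \in rels -> r.1.1 != r.1.2 /\ r.2.1 != r.2.2.
Proof.
case: Hsk => _ /allP H _ /H /andP [] //.
Qed.

Lemma count2 (T : eqType) (Q : pred T) s a b : a \in s -> b \in s -> Q a -> Q b -> a != b ->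
  1 < count Q s.
Proof.
move=> ha hb qa qb nab.
have H1 : count (predU (pred1 a) (pred1 b)) s <= count Q s.
  by apply: sub_count => y /orP [] /eqP ->.
have H2 := count_predUI (pred1 a) (pred1 b) s.
have H3 : count (predI (pred1 a) (pred1 b)) s = 0.
  apply/eqP; rewrite -leqn0 leqNgt -has_count; apply/hasP => -[y _ /andP [/eqP -> /eqP e]].
  by rewrite e eqxx in nab.
have H4 : 0 < count (pred1 a) s by rewrite -has_count has_pred1.
have H5 : 0 < count (pred1 b) s by rewrite -has_count has_pred1.
rewrite H3 addn0 in H2.
apply: leq_trans H1; rewrite H2.
by rewrite -(addn1 1) leq_add.
Qed.

Lemma rel_uniq r r' v : r \in rels -> r' \in rels ->
  (v = s1 r \/ v = s2 r) -> (v = s1 r' \/ v = s2 r') -> r = r'.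
Proof.
move=> hr hr' hv hv'.
case: (rels_diag hr) => d1 d2.
have [p [q [ev' pq]]] : exists p q, v = [:: p; q] /\ p != q.
  by case: hv => ->; [exists r.1.1, r.1.2 | exists r.2.1, r.2.2].
apply/eqP; apply/negPn/negP => nrr.
case: Hsk => _ _ /(_ p q pq) Hc.
have := count2 (Q := fun r : relation n => (r.1 == (p, q)) || (r.2 == (p, q))) hr hr'.
rewrite Hc ltnn => H.
suff : false by [].
apply: H nrr.
- by case: hv; rewrite ev' /s1 /s2 => -[-> ->]; rewrite -!surjective_pairing eqxx ?orbT.
- by case: hv'; rewrite ev' /s1 /s2 => -[-> ->]; rewrite -!surjective_pairing eqxx ?orbT.
Qed.

Lemma related_sym u v : related u v -> related v u.
Proof.
case=> [->|[r hr [[-> ->]|[-> ->]]]]; first by left.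
- by right; exists r => //; right.
- by right; exists r => //; left.
Qed.

Lemma related_trans u v w : related u v -> related v w -> related u w.
Proof.
case=> [->//|[r hr huv]]; case=> [<-|[r' hr' hvw]]; first by right; exists r.
have e : r = r'.
  apply: (rel_uniq (v := v) hr hr').
  - by case: huv => -[_ ->]; [right|left].
  - by case: hvw => -[-> _]; [left|right].
subst r'.
case: huv => -[eu ev0]; case: hvw => -[ev1 ew]; subst u w.
- by left; rewrite -ev1 ev0.
- by left.
- by left.
- by left; rewrite -ev1 ev0.
Qed.

Lemma cong_size u v : cong rels u v -> size u = size v.
Proof.
elim.
- by [].
- by move=> ? ? _ ->.
- by move=> ? ? ? _ -> _ ->.
- by move=> u0 v0 r _; rewrite !size_cat.
Qed.

Lemma cong2 u v : cong rels u v -> size u = 2 -> related u v.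
Proof.
elim=> {u v}.
- by move=> w _; left.
- move=> u v c IH su; apply: related_sym; apply: IH.
  by rewrite (cong_size c).
- move=> u v w c1 IH1 c2 IH2 su.
  apply: (related_trans (IH1 su)); apply: IH2.
  by rewrite -(cong_size c1).
- move=> u v r hr; rewrite !size_cat /= => e.
  have [u0 v0] : u = [::] /\ v = [::].
    by case: u e => [|? ?] /=; case: v => [|? ?] //=; rewrite ?addn0 // => e; move: e; rewrite !addnS.
  move: u0 v0 => -> ->; right; exists r => //; left; split.
  by [].
  by [].
Qed.

Lemma cong_const u v m a : cong rels u v -> (u = nseq m a <-> v = nseq m a).
Proof.
move=> c; elim: c m => {u v}.
- by [].
- by move=> u v _ IH m; split => /(IH m).
- by move=> u v w _ IH1 _ IH2 m; split => [/(IH1 m)/(IH2 m)|/(IH2 m)/(IH1 m)].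
- move=> u v r hr m.
  have bad : forall s, s = u ++ [:: r.1.1; r.1.2] ++ v -> s = nseq m a -> False.
    move=> s -> e; case: (rels_diag hr) => d _.
    have h1 : r.1.1 \in nseq m a by rewrite -e !mem_cat !inE eqxx orbT.
    have h2 : r.1.2 \in nseq m a by rewrite -e !mem_cat !inE eqxx !orbT.
    move: h1 h2; rewrite !mem_nseq => /andP [_ /eqP e1] /andP [_ /eqP e2].
    by rewrite e1 e2 eqxx in d.
  have bad2 : forall s, s = u ++ [:: r.2.1; r.2.2] ++ v -> s = nseq m a -> False.
    move=> s -> e; case: (rels_diag hr) => _ d.
    have h1 : r.2.1 \in nseq m a by rewrite -e !mem_cat !inE eqxx orbT.
    have h2 : r.2.2 \in nseq m a by rewrite -e !mem_cat !inE eqxx !orbT.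
    move: h1 h2; rewrite !mem_nseq => /andP [_ /eqP e1] /andP [_ /eqP e2].
    by rewrite e1 e2 eqxx in d.
  split => e; [case: (bad _ erefl e)|case: (bad2 _ erefl e)].
Qed.

Lemma eqM_cong u v : ev u = ev v -> cong rels u v.
Proof. by case: Hpr => _ /(_ u v) []. Qed.

Lemma eq2_related a b c d : mul (x a) (x b) = mul (x c) (x d) -> related [:: a; b] [:: c; d].
Proof. by rewrite -!ev2 => /eqM_cong/cong2; apply. Qed.

Lemma eq_diag a c d : mul (x c) (x d) = mul (x a) (x a) -> c = a /\ d = a.
Proof.
rewrite -!ev2 => /eqM_cong /(cong_const 2 a) [_ /(_ erefl)] [-> ->]; by [].
Qed.

Lemma cyc_data i j : exists d : nat * 'I_n * 'I_n,
  [/\ 0 < d.1.1, mul (xp j d.1.1) (x i) = mul (x i) (xp d.1.2 d.1.1) &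
      mul (x j) (x d.2) = mul (x i) (x d.1.2)].
Proof.
case: (Hcy i j) => k [z [y' [k0 z0 ch last]]].
have H : forall t, t < k -> mul (xp j t) (x (z 0)) = mul (x (z t)) (xp y' t).
  elim=> [|t IH] ht; first by rewrite xp0 mul1m mulm1.
  rewrite xpS -mulA IH ?(ltnW ht) // mulA ch // -mulA -xpS //.
exists (k, y', z k.-1); split => //=.
have := H k.-1; rewrite ltn_predL => /(_ k0) Hk.
by rewrite -(prednK k0) xpS -mulA -z0 Hk z0 mulA last -mulA -xpS.
Qed.

Lemma all_data : exists D : 'I_n * 'I_n -> nat * 'I_n * 'I_n, forall p,
  [/\ 0 < (D p).1.1, mul (xp p.2 (D p).1.1) (x p.1) = mul (x p.1) (xp (D p).1.2 (D p).1.1) &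
      mul (x p.2) (x (D p).2) = mul (x p.1) (x (D p).1.2)].
Proof. exact: (fin_all_exists (fun p : ('I_n * 'I_n)%type => cyc_data p.1 p.2)). Qed.


Section Comb2.
Variable D : 'I_n * 'I_n -> nat * 'I_n * 'I_n.
Hypothesis HD : forall p,
  [/\ 0 < (D p).1.1, mul (xp p.2 (D p).1.1) (x p.1) = mul (x p.1) (xp (D p).1.2 (D p).1.1) &
      mul (x p.2) (x (D p).2) = mul (x p.1) (x (D p).1.2)].

Definition kk i j := (D (i, j)).1.1.
Definition T i j := (D (i, j)).1.2.
Definition W i j := (D (i, j)).2.
Lemma kk_gt0 i j : 0 < kk i j. Proof. by case: (HD (i, j)). Qed.
Lemma E1 i j : mul (xp j (kk i j)) (x i) = mul (x i) (xp (T i j) (kk i j)).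
Proof. by case: (HD (i, j)). Qed.
Lemma E2 i j : mul (x j) (x (W i j)) = mul (x i) (x (T i j)).
Proof. by case: (HD (i, j)). Qed.

Lemma Tii i : T i i = i.
Proof.
have := E1 i i; rewrite -xpSr /xp -ev_cons => /eqM_cong /(cong_const (kk i i).+1 i) [H _].
move: (H erefl) (kk_gt0 i i); rewrite /T /kk.
by case: (D (i, i)).1.1 => //= k [-> _].
Qed.

Lemma other_side r u u' v : r \in rels ->
  (u = s1 r /\ v = s2 r) \/ (u = s2 r /\ v = s1 r) ->
  (u' = s1 r /\ v = s2 r) \/ (u' = s2 r /\ v = s1 r) -> u = u'.
Proof.
by move=> _ [] [-> e1] [] [-> e2] //; rewrite -?e1 -?e2 // -e1 e2.
Qed.

Lemma T_inj i : injective (T i).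
Proof.
move=> j1 j2 e; case: (eqVneq j1 j2) => // ne; exfalso.
have h1 := E2 i j1; have h2 := E2 i j2; rewrite -e in h2.
case: (eqVneq j1 i) => [e1|n1].
  move: h2; rewrite e1 Tii => /eq_diag [e2 _].
  by rewrite e1 e2 eqxx in ne.
case: (eqVneq j2 i) => [e2|n2].
  move: h1; rewrite e e2 Tii => /eq_diag [e1 _].
  by rewrite e1 eqxx in n1.
case: (eq2_related h1) => [[e1 _]|[r1 hr1 hh1]]; first by rewrite e1 eqxx in n1.
case: (eq2_related h2) => [[e2 _]|[r2 hr2 hh2]]; first by rewrite e2 eqxx in n2.
have er : r1 = r2.
  apply: (rel_uniq (v := [:: i; T i j1]) hr1 hr2).
  - by case: hh1 => -[_ ->]; [right|left].
  - by case: hh2 => -[_ ->]; [right|left].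
subst r2.
have := other_side hr1 hh1 hh2 => -[e1 _].
by rewrite e1 eqxx in ne.
Qed.

Definition Tp i : {perm 'I_n} := perm (@T_inj i).
Lemma TpE i j : Tp i j = T i j. Proof. by rewrite permE. Qed.

Definition P := (\prod_(p : 'I_n * 'I_n) kk p.1 p.2 * \prod_(z : 'I_n) #[Tp z]%g)%N.

Lemma P_gt0 : 0 < P.
Proof.
rewrite muln_gt0 !prodn_gt0 // => *; by rewrite ?order_gt0 ?kk_gt0.
Qed.

Lemma dvd_prodF (I : finType) (F : I -> nat) i : (F i %| \prod_j F j)%N.
Proof. by rewrite (bigD1 i) //= dvdn_mulr. Qed.

Lemma dvd_kk i j : (kk i j %| P)%N.
Proof. by apply: dvdn_mulr; apply: (dvd_prodF (fun p : 'I_n * 'I_n => kk p.1 p.2) (i, j)). Qed.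

Lemma dvd_ord z : (#[Tp z]%g %| P)%N.
Proof. by apply: dvdn_mull; apply: (dvd_prodF (fun z => #[Tp z]%g)). Qed.

Lemma TpP z : (Tp z ^+ P)%g = 1%g.
Proof. by rewrite -(divnK (dvd_ord z)) mulnC expgM expg_order expg1n. Qed.

Lemma K1 i j : mul (xp j P) (x i) = mul (x i) (xp (T i j) P).
Proof.
rewrite -(divnK (dvd_kk i j)); elim: (P %/ kk i j) => [|q IH].
  by rewrite mul0n xp0 mul1m mulm1.
by rewrite mulSn !xpD -mulA IH mulA E1 -mulA.
Qed.

Lemma K1inv i j : mul (x i) (xp j P) = mul (xp ((Tp i)^-1 j)%g P) (x i).
Proof. by rewrite K1 -TpE permKV. Qed.

Lemma K3 i j m : mul (xp j P) (xp i m) = mul (xp i m) (xp ((Tp i ^+ m)%g j) P).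
Proof.
elim: m j => [|m IH] j; first by rewrite xp0 expg0 perm1 mul1m mulm1.
rewrite xpS mulA K1 -mulA IH mulA -xpS.
by rewrite -TpE !permX iterSr.
Qed.

Lemma K4 i j : mul (xp j P) (xp i P) = mul (xp i P) (xp j P).
Proof. by rewrite K3 TpP perm1. Qed.

Lemma K5 v j : exists j', mul (xp j P) (ev v) = mul (ev v) (xp j' P).
Proof.
elim: v j => [|a v IH] j /=; first by exists j; rewrite mul1m mulm1.
case: (IH (T a j)) => j' H; exists j'.
by rewrite mulA K1 -mulA H mulA.
Qed.

Lemma K6 v j : exists j', mul (ev v) (xp j P) = mul (xp j' P) (ev v).
Proof.
elim/last_ind: v j => [|v a IH] j /=; first by exists j; rewrite mul1m mulm1.
rewrite -cats1 ev_cat ev1.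
rewrite -mulA K1inv mulA.
case: (IH ((Tp a)^-1 j)%g) => j' H; exists j'.
by rewrite H -mulA.
Qed.

Definition apow (w : seq 'I_n) := ev (flatten [seq nseq P i | i <- w]).
Lemma apow_nil : apow [::] = one. Proof. by []. Qed.
Lemma apow_cons i w : apow (i :: w) = mul (xp i P) (apow w).
Proof. by rewrite /apow /= ev_cat. Qed.
Lemma apow_cat u w : apow (u ++ w) = mul (apow u) (apow w).
Proof. by rewrite /apow map_cat flatten_cat ev_cat. Qed.

Lemma xp_apow i w : mul (xp i P) (apow w) = mul (apow w) (xp i P).
Proof.
elim: w => [|j w IH]; first by rewrite apow_nil mul1m mulm1.
by rewrite apow_cons mulA K4 -mulA IH mulA.
Qed.

Lemma apow_comm u w : mul (apow u) (apow w) = mul (apow w) (apow u).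
Proof.
elim: u => [|i u IH]; first by rewrite apow_nil mul1m mulm1.
by rewrite apow_cons -mulA IH mulA xp_apow mulA.
Qed.

Lemma apow_ev w v : exists w', mul (apow w) (ev v) = mul (ev v) (apow w').
Proof.
elim: w => [|i w [w' IH]]; first by exists [::]; rewrite apow_nil mul1m mulm1.
case: (K5 v i) => j H.
exists (j :: w'); by rewrite apow_cons -mulA IH mulA H -mulA -apow_cons.
Qed.

Lemma ev_apow w v : exists w', mul (ev v) (apow w) = mul (apow w') (ev v).
Proof.
elim/last_ind: w => [|w i [w' IH]]; first by exists [::]; rewrite apow_nil mul1m mulm1.
case: (K6 v i) => j H.
exists (rcons w' j).
rewrite -!cats1 !apow_cat mulA IH -mulA.
have -> : apow [:: i] = xp i P by rewrite apow_cons apow_nil mulm1.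
have -> : apow [:: j] = xp j P by rewrite apow_cons apow_nil mulm1.
by rewrite H mulA.
Qed.

Lemma xp_mult i q : xp i (q * P) = apow (nseq q i).
Proof.
elim: q => [|q IH]; first by rewrite mul0n.
by rewrite mulSn xpD IH apow_cons.
Qed.

Lemma decomp_gen (L : seq 'I_n) (a : 'I_n -> nat) : exists w,
  ev (flatten [seq nseq (a i) i | i <- L]) =
  mul (ev (flatten [seq nseq (a i %% P) i | i <- L])) (apow w).
Proof.
elim: L => [|i L [w IH]] /=; first by exists [::]; rewrite mulm1.
rewrite !ev_cat IH.
case: (apow_ev (nseq (a i %/ P) i) (flatten [seq nseq (a i %% P) i | i <- L])) => w' H.
exists (w' ++ w).
have -> : ev (nseq (a i) i) = mul (xp i (a i %% P)) (apow (nseq (a i %/ P) i)).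
  by rewrite -xp_mult -xpD addnC -divn_eq.
rewrite -!mulA; congr (mul _ _).
by rewrite mulA H -mulA apow_cat.
Qed.

End Comb2.
End Comb.

End CombM.

Module MainM.
Import LinM DickM NoethM PIM PIWM CombM.
Import GRing.Theory.

Section Main.
Variables (n : nat) (rels : seq (relation n)) (M : Type) (mul : M -> M -> M) (one : M) (x : 'I_n -> M).
Hypothesis Hmon : is_monoid mul one.
Hypothesis Hsk : skew_type rels.
Hypothesis Hpr : presents mul one rels x.
Variable D : 'I_n * 'I_n -> nat * 'I_n * 'I_n.
Hypothesis HD : forall p,
  [/\ 0 < (D p).1.1, mul (xp mul one x p.2 (D p).1.1) (x p.1) = mul (x p.1) (xp mul one x (D p).1.2 (D p).1.1) &
      mul (x p.2) (x (D p).2) = mul (x p.1) (x (D p).1.2)].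
Hypothesis Hnf : forall s : M, exists a : 'I_n -> nat, s = eval_word mul one x (ordered_word a).

Local Notation ev := (eval_word mul one x).
Local Notation p := (P Hmon Hsk Hpr HD).
Local Notation apw := (apow Hmon Hsk Hpr HD).

Lemma count_ow (b : 'I_n -> nat) j : count_mem j (ordered_word b) = b j.
Proof.
rewrite /ordered_word count_flatten -map_comp sumnE big_map.
rewrite (eq_bigr (fun i => (i == j) * b i)); last by move=> i _; rewrite /= count_nseq.
rewrite big_enum /= (bigD1 j) //= eqxx mul1n big1 ?addn0 // => i /negbTE ->.
by rewrite mul0n.
Qed.

Lemma apow_perm w1 w2 : perm_eq w1 w2 -> apw w1 = apw w2.
Proof.
move=> h; apply: (catCA_perm_ind (P := fun w => apw w1 = apw w)) h erefl => s1 s2 s3 ->.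
rewrite !apow_cat (mulA Hmon) (apow_comm Hmon Hsk Hpr HD s1 s2) -(mulA Hmon) //.
Qed.

Definition amono (nu : 'X_{1..n}) := apw (ordered_word (fun i => nu i)).

Lemma amono_apow w : exists nu, apw w = amono nu.
Proof.
exists [multinom count_mem i w | i < n]; apply: apow_perm.
rewrite /perm_eq; apply/allP => j _; apply/eqP.
by rewrite count_ow mnmE.
Qed.

Lemma amonoD nu1 nu2 : amono (nu1 + nu2)%MM = mul (amono nu1) (amono nu2).
Proof.
rewrite /amono -apow_cat; apply: apow_perm.
rewrite /perm_eq; apply/allP => j _; apply/eqP.
by rewrite count_cat !count_ow mnmDE.
Qed.

Lemma amono0 : amono 0%MM = one.
Proof.
rewrite /amono (@apow_perm _ [::]) //.
rewrite /perm_eq; apply/allP => j _; apply/eqP.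
by rewrite count_ow mnm0E.
Qed.

Definition gfun (c : {ffun 'I_n -> 'I_p}) := ev (ordered_word (fun i => c i)).

Lemma decomp s : exists c nu, s = mul (gfun c) (amono nu).
Proof.
case: (Hnf s) => a0 ->.
case: (decomp_gen Hmon Hsk Hpr HD (enum 'I_n) a0) => w ->.
case: (amono_apow w) => nu ->.
exists [ffun i => Ordinal (ltn_pmod (a0 i) (P_gt0 Hmon Hsk Hpr HD))], nu.
congr (mul _ _); rewrite /gfun /ordered_word; congr ev; congr flatten.
by apply: eq_map => i; rewrite ffunE.
Qed.

Lemma swapL c nu : exists nu', mul (gfun c) (amono nu) = mul (amono nu') (gfun c).
Proof.
case: (ev_apow Hmon Hsk Hpr HD (ordered_word (fun i => nu i)) (ordered_word (fun i => c i))) => w' H.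
case: (amono_apow w') => nu' e; exists nu'.
by rewrite /gfun /amono H e.
Qed.


Local Open Scope ring_scope.

Lemma group_sum (V : zmodType) (I : finType) (mm : nat) (c : 'I_mm -> I) (F : I -> 'I_mm -> V) :
  \sum_(i : I) \sum_(t < mm) (if c t == i then F i t else 0) = \sum_(t < mm) F (c t) t.
Proof.
rewrite exchange_big; apply: eq_bigr => t _ /=.
rewrite (bigD1 (c t)) //= eqxx big1 ?addr0 // => i ni.
by rewrite eq_sym (negbTE ni).
Qed.

Lemma alg_part (K : fieldType) (A : M -> Prop) (HA : forall nu, A (amono nu))
  (R : algType K) (e : M -> R) : is_monoid_algebra mul one e ->
  [/\ finite_left_module (span_of e A), finite_right_module (span_of e A),
      right_noetherian R, left_noetherian R & PI_algebra R].
Proof.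
case=> e1 eM espan eind.
pose I := {ffun 'I_n -> 'I_p}.
have Hs : forall r : R, exists (mm : nat) (c : 'I_mm -> I) (nu : 'I_mm -> 'X_{1..n}) (k : 'I_mm -> K),
    r = \sum_(t < mm) k t *: (e (gfun (c t)) * e (amono (nu t))).
  move=> r; case: (espan r) => mm [f [k ->]].
  have [cn Hcn] : exists cn : 'I_mm -> I * 'X_{1..n}, forall t, f t = mul (gfun (cn t).1) (amono (cn t).2).
    have H : forall t, exists cn : I * 'X_{1..n}, f t = mul (gfun cn.1) (amono cn.2).
      by move=> t; case: (decomp (f t)) => c [nu ->]; exists (c, nu).
    exact: (fin_all_exists H).
  exists mm, (fun t => (cn t).1), (fun t => (cn t).2), k.
  by apply: eq_bigr => t _; rewrite Hcn eM.
have HsL : forall r : R, exists (mm : nat) (c : 'I_mm -> I) (nu : 'I_mm -> 'X_{1..n}) (k : 'I_mm -> K),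
    r = \sum_(t < mm) k t *: (e (amono (nu t)) * e (gfun (c t))).
  move=> r; case: (Hs r) => mm [c [nu [k ->]]].
  have [nu' Hnu] : exists nu' : 'I_mm -> 'X_{1..n}, forall t, mul (gfun (c t)) (amono (nu t)) = mul (amono (nu' t)) (gfun (c t)).
    exact: (fin_all_exists (fun t => swapL (c t) (nu t))).
  exists mm, c, nu', k.
  by apply: eq_bigr => t _; rewrite -!eM Hnu.
split.
-
  exists #|I|, (fun i => e (gfun (enum_val i))) => r.
  case: (HsL r) => mm [c [nu [k ->]]].
  exists (fun i => \sum_(t < mm) (if enum_rank (c t) == i then k t else 0) *: e (amono (nu t))); split.
    move=> i; exists mm, (fun t => amono (nu t)), (fun t => if enum_rank (c t) == i then k t else 0).
    by split.
  rewrite (eq_bigr (fun i => \sum_(t < mm) (if enum_rank (c t) == i then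
       k t *: (e (amono (nu t)) * e (gfun (enum_val i))) else 0))); last first.
    move=> i _; rewrite mulr_suml; apply: eq_bigr => t _.
    by case: ifP => _; rewrite ?scale0r ?mul0r // -scalerAl.
  rewrite (group_sum (fun t => enum_rank (c t)) (fun i t => k t *: (e (amono (nu t)) * e (gfun (enum_val i))))).
  by apply: eq_bigr => t _; rewrite enum_rankK.
-
  exists #|I|, (fun i => e (gfun (enum_val i))) => r.
  case: (Hs r) => mm [c [nu [k ->]]].
  exists (fun i => \sum_(t < mm) (if enum_rank (c t) == i then k t else 0) *: e (amono (nu t))); split.
    move=> i; exists mm, (fun t => amono (nu t)), (fun t => if enum_rank (c t) == i then k t else 0).
    by split.
  rewrite (eq_bigr (fun i => \sum_(t < mm) (if enum_rank (c t) == i then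
       k t *: (e (gfun (enum_val i)) * e (amono (nu t))) else 0))); last first.
    move=> i _; rewrite mulr_sumr; apply: eq_bigr => t _.
    by case: ifP => _; rewrite ?scale0r ?mulr0 // -scalerAr.
  rewrite (group_sum (fun t => enum_rank (c t)) (fun i t => k t *: (e (gfun (enum_val i)) * e (amono (nu t))))).
  by apply: eq_bigr => t _; rewrite enum_rankK.
-
  move=> J cl asc.
  apply: (@acc_chain K R I n (fun c => e (gfun c)) (fun nu v => v * e (amono nu))) => //.
  + by move=> nu u v; rewrite mulrDl.
  + by move=> nu k u; rewrite -scalerAl.
  + by move=> nu1 nu2 u; rewrite addmC amonoD eM mulrA.
  + move=> t; case: (cl t) => h0 hD hM; split => //; last by move=> nu u; apply: hM.
    by move=> k u hu; rewrite -[u]mulr1 scalerAr; apply: hM.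
-
  move=> J cl asc.
  apply: (@acc_chain K R I n (fun c => e (gfun c)) (fun nu v => e (amono nu) * v)) => //.
  + by move=> nu u v; rewrite mulrDr.
  + by move=> nu k u; rewrite -scalerAr.
  + by move=> nu1 nu2 u; rewrite amonoD eM mulrA.
  + move=> t; case: (cl t) => h0 hD hM; split => //; last by move=> nu u; apply: hM.
    by move=> k u hu; rewrite -[u]mul1r scalerAl; apply: hM.
-
  have [c0 _] := decomp one.
  pose Gs (j : 'I_#|I|.+1) := e (gfun (nth c0 (enum I) j)).
  have GsE : forall c, Gs (inord (enum_rank c)) = e (gfun c).
    move=> c; rewrite /Gs inordK ?nth_enum_rank //.
    by apply: leqW; apply: ltn_ord.
  apply: (@stdp_PI K R ((#|I|.+1 * #|I|.+1).+1)).
  apply: (@rep_PI K R n (lin (fun nu => e (amono nu))) #|I| Gs).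
  + exact: linD.
  + exact: linZ.
  + move=> pp q.
    rewrite [in LHS](mpolyE pp) [in LHS](mpolyE q) mulr_suml lin_sum.
    rewrite [lin _ pp]/lin [lin _ q]/lin mulr_suml.
    apply: eq_bigr => mu _; rewrite mulr_sumr lin_sum mulr_sumr; apply: eq_bigr => nu _.
    by rewrite -scalerAl -scalerAr !linZ -mpolyXD linX amonoD eM -scalerAl -scalerAr.
  + by rewrite -mpolyX0 linX amono0 e1.
  + move=> v; case: (Hs v) => mm [c [nu [k ->]]].
    exists (fun j => \sum_(t < mm) (if inord (enum_rank (c t)) == j then k t else 0) *: 'X_[nu t]).
    rewrite (eq_bigr (fun j => \sum_(t < mm) (if inord (enum_rank (c t)) == j then
       k t *: (Gs j * e (amono (nu t))) else 0))); last first.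
      move=> j _; rewrite lin_sum mulr_sumr; apply: eq_bigr => t _.
      by case: ifP => _; rewrite ?scale0r ?lin0 ?mulr0 // linZ linX -scalerAr.
    rewrite (group_sum (fun t => inord (enum_rank (c t))) (fun j t => k t *: (Gs j * e (amono (nu t))))).
    by apply: eq_bigr => t _; rewrite GsE.
  + move=> r H.
    have [c1 [nu1 e1']] := decomp one.
    by rewrite -[r]mulr1 -e1 e1' eM mulrA -GsE H mul0r.
by [].
Qed.

End Main.

End MainM.

Import LinM DickM NoethM PIM PIWM CombM MainM.
Import GRing.Theory.
Local Open Scope ring_scope.

Theorem proposition2p2 (K : fieldType) (n : nat) (rels : seq (relation n))
  (M : Type) (mul : M -> M -> M) (one : M) (x : 'I_n -> M) :
  is_monoid mul one ->
  skew_type rels ->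
  presents mul one rels x ->
  cyclic_condition mul x ->
  (forall s : M, exists a : 'I_n -> nat, s = eval_word mul one x (ordered_word a)) ->
  exists p : nat,
    let A : M -> Prop := fun s =>
      exists w : seq 'I_n, s = eval_word mul one x (flatten [seq nseq p i | i <- w]) in
    let C : M -> Prop := fun s =>
      exists b : 'I_n -> nat, (forall i, (b i < p)%N) /\
        s = eval_word mul one x (ordered_word b) in
    [/\ (0 < p)%N,
        (forall a b, A a -> A b -> mul a b = mul b a),
        (forall s : M, exists c a, [/\ C c, A a & s = mul c a]),
        (forall c, C c ->
           (forall a, A a -> exists a', A a' /\ mul c a = mul a' c) /\
           (forall a, A a -> exists a', A a' /\ mul a c = mul c a')) &
        forall (R : algType K) (e : M -> R), is_monoid_algebra mul one e ->
          [/\ finite_left_module (span_of e A), finite_right_module (span_of e A),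
              right_noetherian R, left_noetherian R & PI_algebra R]].
Proof.
move=> Hmon Hsk Hpr Hcy Hnf.
have [D HD] := all_data Hmon Hcy.
exists (P Hmon Hsk Hpr HD) => A C.
split.
- exact: P_gt0.
- move=> a b [u ->] [w ->]; exact: (apow_comm Hmon Hsk Hpr HD u w).
- move=> s; case: (Hnf s) => a0 ->.
  case: (decomp_gen Hmon Hsk Hpr HD (enum 'I_n) a0) => w ->.
  eexists; exists (apow Hmon Hsk Hpr HD w); split; last by [].
    exists (fun i => (a0 i %% P Hmon Hsk Hpr HD)%N); split => //.
    by move=> i; apply: ltn_pmod; apply: P_gt0.
  by exists w.
- move=> c [b [_ ->]]; split.
  + move=> a [w ->].
    case: (ev_apow Hmon Hsk Hpr HD w (ordered_word b)) => w' H.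
    by exists (apow Hmon Hsk Hpr HD w'); split => //; exists w'.
  + move=> a [w ->].
    case: (apow_ev Hmon Hsk Hpr HD w (ordered_word b)) => w' H.
    by exists (apow Hmon Hsk Hpr HD w'); split => //; exists w'.
- move=> R e He.
  apply: (@alg_part n rels M mul one x Hmon Hsk Hpr D HD Hnf K A) => // nu.
  by exists (ordered_word (fun i => nu i)).
Qed.
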